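(* Let $(G,\theta)$ be a cyclotomic $p$-oriented profinite group, let $M$ be a Hilbert 90 module for $(G,\theta)$, and fix an injective homomorphism $\iota\colon\mathbb Z/p\mathbb Z\hookrightarrow M$. Let $a,b\in M^G$ be such that $\chi_a\cup\chi_b=0$ in $H^2(G,\mathbb Z/p\mathbb Z)$. Then there exists $\alpha\in M^{G_a}$ such that $N_{G/G_a}(\alpha)=b$.
   Context: A $p$-oriented profinite group is a pair $(G,\theta)$ with $G$ profinite and $\theta\colon G\to\mathbb Z_p^\times$ continuous; it is cyclotomic if $\theta(G)\subset 1+p\mathbb Z_p$. Let $S$ be the discrete $G$-module $\mathbb Q/\mathbb Z_{(p)}$ with $g$ acting by multiplication by $\theta(g)$. A Hilbert 90 module for $(G,\theta)$ is a discrete $G$-module $M$ with $pM=M$, $M\{p\}\simeq S$ as $G$-modules, and $H^1(H,M)=0$ for every open subgroup $H\subset G$. In the cyclotomic case, the exact sequence $0\to\mathbb Z/p\mathbb Z\xrightarrow{\iota}M\xrightarrow{p}M\to0$ gives a connecting map $\partial\colon M^G\to H^1(G,\mathbb Z/p\mathbb Z)$; for $a\in M^G$ set $\chi_a=\partial(a)$ and $G_a=\ker(\chi_a)$. $N_{G/G_a}\colon M^{G_a}\to M^G$ is the norm $x\mapsto\sum_{gG_a\in G/G_a}gx$. *)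

(* Defs.v *)
From HB Require Import structures.
From Stdlib Require Import ClassicalEpsilon.
From mathcomp Require Import all_boot all_order all_algebra.
From mathcomp Require Import all_classical topology.
Set Implicit Arguments.
Unset Strict Implicit.
Unset Printing Implicit Defensive.
Import Order.TTheory GRing.Theory Num.Theory.
Local Open Scope classical_set_scope.
Local Open Scope ring_scope.

Record profinite_group (G : topologicalType) := ProfiniteGroup {
  gmul : G -> G -> G;
  ginv : G -> G;
  gone : G;
  gmulA : forall x y z, gmul x (gmul y z) = gmul (gmul x y) z;
  gmul1 : forall x, gmul x gone = x;
  g1mul : forall x, gmul gone x = x;
  gmulV : forall x, gmul x (ginv x) = gone;
  gVmul : forall x, gmul (ginv x) x = gone;
  gmul_cont : continuous (fun x : G * G => gmul x.1 x.2);
  ginv_cont : continuous ginv;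
  g_compact : compact [set: G];
  g_hausdorff : hausdorff_space G;
  g_totdisc : totally_disconnected [set: G] }.

Section Defs.
Variables (G : topologicalType) (Gm : profinite_group G).

(* A function on G with values in a discrete set is continuous iff it is
   locally constant (on the subset H of its domain). *)
Definition locally_const_on {T : Type} (H : set G) (f : G -> T) : Prop :=
  forall g, H g -> exists U : set G, [/\ open U, U g &
    forall h, U h -> H h -> f h = f g].

(* p-adic integers Z_p = lim Z/p^n : x n in [0, p^n) with x (n+1) = x n mod p^n *)
Definition Zp_elt (p : nat) (x : nat -> nat) : Prop :=
  forall n, (x n < p ^ n)%N /\ (x n.+1 %% p ^ n)%N = x n.
Definition Zp_mul (p : nat) (x y : nat -> nat) : nat -> nat :=
  fun n => (x n * y n %% p ^ n)%N.
Definition Zp_unit (p : nat) (x : nat -> nat) : Prop := coprime (x 1%N) p.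

(* theta : G -> Z_p^x continuous homomorphism (continuity for the inverse
   limit topology = each residue map G -> Z/p^n is locally constant). *)
Definition p_orientation (p : nat) (theta : G -> nat -> nat) : Prop :=
  [/\ forall g, Zp_elt p (theta g) /\ Zp_unit p (theta g),
      forall g h, theta (gmul Gm g h) = Zp_mul p (theta g) (theta h) &
      forall n, locally_const_on [set: G] (fun g => theta g n)].

(* cyclotomic: theta(G) in 1 + p Z_p *)
Definition cyclotomic_orientation (p : nat) (theta : G -> nat -> nat) : Prop :=
  p_orientation p theta /\ forall g, theta g 1%N = 1%N.

Definition discrete_module (M : zmodType) (act : G -> M -> M) : Prop :=
  [/\ forall g (x y : M), act g (x + y) = act g x + act g y,
      forall x, act (gone Gm) x = x,
      forall g h x, act (gmul Gm g h) x = act g (act h x) &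
      forall x, open [set g | act g x = x]].

Definition open_subgroup (H : set G) : Prop :=
  [/\ open H, H (gone Gm),
      forall g h, H g -> H h -> H (gmul Gm g h) &
      forall g, H g -> H (ginv Gm g)].

Definition H1_vanishes (M : zmodType) (act : G -> M -> M) (H : set G) : Prop :=
  forall f : G -> M, locally_const_on H f ->
    (forall g h, H g -> H h -> f (gmul Gm g h) = f g + act g (f h)) ->
    exists m : M, forall g, H g -> f g = act g m - m.

(* An isomorphism of G-modules S = Q/Z_(p) (twisted by theta) ~ M{p},
   given as an additive map phi : Q -> M with kernel exactly Z_(p),
   image exactly the p-primary torsion M{p}, and G-equivariant:
   g . phi(k/p^n) = phi(theta(g) k / p^n). *)
Definition S_iso_torsion (p : nat) (theta : G -> nat -> nat)
    (M : zmodType) (act : G -> M -> M) (phi : rat -> M) : Prop :=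
  [/\ forall q r, phi (q + r) = phi q + phi r,
      forall q, phi q = 0 <-> coprime `|denq q|%N p,
      forall m : M, (exists n, m *+ (p ^ n) = 0) <-> (exists q, phi q = m) &
      forall g (k : int) (n : nat),
        act g (phi (k%:~R / (p ^ n)%:R)) =
        phi ((k * (theta g n)%:Z)%:~R / (p ^ n)%:R)].

Definition hilbert90_module (p : nat) (theta : G -> nat -> nat)
    (M : zmodType) (act : G -> M -> M) : Prop :=
  [/\ discrete_module act,
      forall m : M, exists c : M, c *+ p = m,
      exists phi : rat -> M, S_iso_torsion p theta act phi &
      forall H, open_subgroup H -> H1_vanishes act H].

(* The connecting map  M^G -> H^1(G, Z/p) = Hom(G, Z/p)  (cyclotomic case):
   chi_a(g) = iota^{-1}(g c - c) where p c = a. *)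
Definition chi (p : nat) (M : zmodType) (act : G -> M -> M)
    (iota : 'Z_p -> M) (a : M) (g : G) : 'Z_p :=
  epsilon (inhabits 0) (fun z => exists c : M, c *+ p = a /\ iota z = act g c - c).

Definition ker_chi (p : nat) (M : zmodType) (act : G -> M -> M)
    (iota : 'Z_p -> M) (a : M) : set G :=
  [set g | chi act iota a g = 0].

(* x ∪ y = 0 in H^2(G, Z/p) (trivial action, continuous cochains):
   the 2-cocycle (g,h) |-> x(g) y(h) is a coboundary of a continuous
   1-cochain f, i.e. x(g) y(h) = f(g) + f(h) - f(gh). *)
Definition cup_vanishes (p : nat) (x y : G -> 'Z_p) : Prop :=
  exists f : G -> 'Z_p, locally_const_on [set: G] f /\
    forall g h, x g * y h = f g + f h - f (gmul Gm g h).

(* N_{G/K}(alpha) = b : the sum of g.alpha over a set of representatives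
   R of the left cosets gK equals b. *)
Definition norm_equals (M : zmodType) (act : G -> M -> M) (K : set G)
    (alpha b : M) : Prop :=
  exists (n : nat) (R : 'I_n -> G),
    (forall g, exists! i, K (gmul Gm (ginv Gm (R i)) g)) /\
    \sum_(i < n) act (R i) alpha = b.

End Defs.

(* Main.v *)
Require Import Defs.
From HB Require Import structures.
From mathcomp Require Import all_boot all_order all_algebra.
From mathcomp Require Import all_classical topology.
From mathcomp Require Import ring.
Import GRing.Theory Num.Theory.
Set Implicit Arguments. Unset Strict Implicit.
Local Open Scope classical_set_scope.
Local Open Scope ring_scope.

Section Add.
Variables (A B : zmodType) (f : A -> B).
Hypothesis fD : forall x y, f (x + y) = f x + f y.
Lemma add_f0 : f 0 = 0.
Proof. have h := fD 0 0; rewrite addr0 in h; apply: (@addrI _ (f 0)); by rewrite -h addr0. Qed.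
Lemma add_fN x : f (- x) = - f x.
Proof. by apply/eqP; rewrite -subr_eq0 opprK -fD addNr add_f0. Qed.
Lemma add_fB x y : f (x - y) = f x - f y.
Proof. by rewrite fD add_fN. Qed.
Lemma add_fMn x n : f (x *+ n) = f x *+ n.
Proof. by elim: n => [|n IH]; rewrite ?mulr0n ?add_f0 // !mulrS fD IH. Qed.
Lemma add_fMz x (z : int) : f (x *~ z) = f x *~ z.
Proof.
case: z => n; first by rewrite -!pmulrn add_fMn.
by rewrite !NegzE !mulrNz add_fN -!pmulrn add_fMn.
Qed.
Lemma add_fsum (I : Type) (r : seq I) (F : I -> A) :
  f (\sum_(i <- r) F i) = \sum_(i <- r) f (F i).
Proof.
elim: r => [|i r IH]; first by rewrite !big_nil add_f0.
by rewrite !big_cons fD IH.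
Qed.
End Add.

Lemma rat_den_copr (n d : int) (p : nat) : d != 0 -> coprime `|d| p ->
  coprime `|denq (n%:~R / d%:~R : rat)| p.
Proof.
move: (n%:~R / d%:~R : rat) (divqP n d) => q [|k x kn0].
  by rewrite eqxx.
by move=> _; rewrite abszM coprimeMl => /andP[].
Qed.

Lemma phi_p (p : nat) (M : zmodType) (phi : rat -> M) :
  prime p -> (forall q r, phi (q + r) = phi q + phi r) ->
  (forall q, phi q = 0 <-> coprime `|denq q|%N p) ->
  forall q, phi (q *+ p) = 0 -> exists k : int, phi q = phi (k%:~R / p%:R).
Proof.
move=> pp phiD phi0 q /phi0 Hc.
set r := q *+ p in Hc.
have [u [v Huv]] := Bezoutz (denq r) p.
have g1 : gcdz (denq r) p = 1.
  apply/eqP; rewrite /gcdz; apply/eqP; congr Posz.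
  by apply/eqP; rewrite absz_nat.
rewrite g1 in Huv.
exists (numq r * u).
have pn0 : (p%:R : rat) != 0 by rewrite pnatr_eq0 -lt0n prime_gt0.
have dn0 : ((denq r)%:~R : rat) != 0 by rewrite intr_eq0 denq_neq0.
have Huv' : (u%:~R * (denq r)%:~R + v%:~R * p%:R : rat) = 1.
  by rewrite pmulrn -!intrM -intrD Huv.
have Hq : q - (numq r * u)%:~R / p%:R = (numq r * v)%:~R / (denq r)%:~R.
  have Hr : r = (numq r)%:~R / (denq r)%:~R by rewrite divq_num_den.
  have Hq : q = r / p%:R by rewrite /r -[q *+ p]mulr_natr (mulfK pn0).
  have E1 : 1 - u%:~R * (denq r)%:~R = v%:~R * p%:R :> rat by apply/eqP; rewrite subr_eq eq_sym addrC Huv'.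
  rewrite Hq {1}Hr !intrM.
  set N := (numq r)%:~R; set D := (denq r)%:~R; set U := u%:~R; set V := v%:~R.
  apply: (@etrans _ _ (N * (1 - U * D) / (D * p%:R))); first by field; rewrite ?dn0 ?pn0.
  by rewrite E1; field; rewrite ?dn0 ?pn0.
have : phi (q - (numq r * u)%:~R / p%:R) = 0.
  apply/phi0; rewrite Hq; apply: rat_den_copr; first exact: denq_neq0.
  by [].
by rewrite (add_fB phiD) => /eqP; rewrite subr_eq0 => /eqP.
Qed.

Lemma int_phi0 (p : nat) (M : zmodType) (phi : rat -> M) :
  (forall q, phi q = 0 <-> coprime `|denq q|%N p) ->
  forall k : int, phi k%:~R = 0.
Proof. by move=> phi0 k; apply/phi0; rewrite denq_int coprime1n. Qed.

Lemma tors_facts (p : nat) (G : topologicalType) (Gm : profinite_group G)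
    (theta : G -> nat -> nat) (M : zmodType) (act : G -> M -> M)
    (iota : 'Z_p -> M) :
  prime p ->
  cyclotomic_orientation Gm p theta ->
  hilbert90_module Gm p theta act ->
  (forall x y, iota (x + y) = iota x + iota y) ->
  injective iota ->
  (forall m, m *+ p = 0 -> exists z, iota z = m) /\
  (forall g m, m *+ p = 0 -> act g m = m).
Proof.
move=> pp [_ cyc] [_ _ [phi [phiD phi0 phiT phiE]] _] iD iinj.
have tr : forall m, m *+ p = 0 -> exists k : int, m = phi (k%:~R / p%:R).
  move=> m mp.
  have [q qm] : exists q, phi q = m by apply/phiT; exists 1%N; rewrite expn1.
  rewrite -qm; apply: phi_p => //; by rewrite (add_fMn phiD) qm.
split; last first.
  move=> g m /tr [k ->].
  have := phiE g k 1%N; rewrite expn1 cyc mulr1 => ->; by [].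
have pn0 : (p%:R : rat) != 0 by rewrite pnatr_eq0 -lt0n prime_gt0.
have p1 : (1 < p)%N by exact: prime_gt1.
have z0 : iota 0 = 0 by exact: add_f0.
have [k0 Hk0] : exists k0 : int, iota 1 = phi (k0%:~R / p%:R).
  apply: tr; rewrite -(add_fMn iD) -(Zp_nat_mod p1) modnn; exact: z0.
have ck0 : coprime `|k0| p.
  rewrite coprime_sym prime_coprime //; apply/negP => Hd.
  have : (p%:Z %| k0)%Z by rewrite dvdzE absz_nat.
  case/dvdzP => t Ht.
  have : iota 1 = iota 0.
    rewrite Hk0 z0 Ht intrM -pmulrn (mulfK pn0); exact: int_phi0.
  by move/iinj/eqP; rewrite oner_eq0.
have [u0 [v0 Huv]] := Bezoutz k0 p.
have g1 : gcdz k0 p = 1 by rewrite /gcdz absz_nat (eqP ck0).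
rewrite g1 in Huv.
have Huv' : (u0%:~R * k0%:~R + v0%:~R * p%:R : rat) = 1.
  by rewrite pmulrn -!intrM -intrD Huv.
have E1 : 1 - u0%:~R * k0%:~R = v0%:~R * p%:R :> rat.
  by apply/eqP; rewrite subr_eq eq_sym addrC Huv'.
move=> m /tr [k ->].
exists ((1 : 'Z_p) *~ (k * u0)).
rewrite (add_fMz iD) Hk0 -(add_fMz phiD).
apply/eqP; rewrite -subr_eq0 -(add_fB phiD); apply/eqP.
rewrite -opprB (add_fN phiD).
have -> : k%:~R / p%:R - (k0%:~R / p%:R) *~ (k * u0) = (k * v0)%:~R :> rat.
  rewrite -mulrzl !intrM.
  apply: (@etrans _ _ (k%:~R * (1 - u0%:~R * k0%:~R) / p%:R)); first by field.
  by rewrite E1; field.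
by rewrite (int_phi0 phi0) oppr0.
Qed.

Lemma lmul_cont (G : topologicalType) (Gm : profinite_group G) (x : G) :
  continuous (fun h => gmul Gm x h).
Proof.
move=> h; apply: (@continuous2_cvg _ _ _ _ _ _ (fun _ => x) id (gmul Gm) x h).
- exact: (@gmul_cont _ Gm (x, h)).
- exact: cvg_cst.
- exact: cvg_id.
Qed.

Lemma lc2 (G : topologicalType) (H : set G) (T1 T2 T3 : Type)
  (f1 : G -> T1) (f2 : G -> T2) (Phi : T1 -> T2 -> T3) :
  locally_const_on H f1 -> locally_const_on H f2 ->
  locally_const_on H (fun g => Phi (f1 g) (f2 g)).
Proof.
move=> h1 h2 g Hg.
have [U1 [oU1 U1g cU1]] := h1 g Hg.
have [U2 [oU2 U2g cU2]] := h2 g Hg.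
exists (U1 `&` U2); split; first exact: openI.
  by split.
by move=> h [U1h U2h] Hh; rewrite cU1 // cU2.
Qed.

Lemma lc_sub (G : topologicalType) (H : set G) (T : Type) (f : G -> T) :
  locally_const_on [set: G] f -> locally_const_on H f.
Proof.
move=> h g _; have [U [oU Ug cU]] := h g I.
by exists U; split => // x Ux _; exact: cU.
Qed.
Lemma rearr (M : zmodType) (A B C Kh Kg X Y : M) : X + Y = A + B ->
  X + (C + Kh + Kg) + Y = B + C + Kh + (A + Kg).
Proof.
move=> h; rewrite addrAC h.
rewrite [A + B]addrC -!addrA; congr (_ + _).
rewrite addrCA; congr (_ + _).
rewrite addrCA; congr (_ + _).
Qed.
Lemma rearr2 (M : zmodType) (X B Y Z P Q m : M) : X + B = Y + Z ->
  X - (P - m) + B = Y - (P - Q) + (Z - (Q - m)).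
Proof.
move=> h; rewrite addrAC h !opprB [RHS]addrACA; congr (_ + _).
by rewrite addrC addrA subrK.
Qed.

Theorem corollary3p3 (p : nat) (G : topologicalType) (Gm : profinite_group G)
    (theta : G -> nat -> nat) (M : zmodType) (act : G -> M -> M)
    (iota : 'Z_p -> M) :
  prime p ->
  cyclotomic_orientation Gm p theta ->
  hilbert90_module Gm p theta act ->
  (forall x y, iota (x + y) = iota x + iota y) ->
  injective iota ->
  forall a b : M,
    (forall g, act g a = a) ->
    (forall g, act g b = b) ->
    cup_vanishes Gm (chi act iota a) (chi act iota b) ->
    exists alpha : M,
      (forall g, ker_chi act iota a g -> act g alpha = alpha) /\
      norm_equals Gm act (ker_chi act iota a) alpha b.
Proof.
move=> pp cyc H90 iD iinj a b aG bG [f [flc fcup]].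
have [timg triv] := tors_facts pp cyc H90 iD iinj.
case: H90 => [[actD act1 actM actO] divM _ H1].
have p1 : (1 < p)%N by exact: prime_gt1.
have z0 : iota 0 = 0 by exact: add_f0.
have pZ0 : (p%:R : 'Z_p) = 0 by rewrite -(Zp_nat_mod p1) modnn.
have itors : forall z, iota z *+ p = 0.
  by move=> z; rewrite -(add_fMn iD) -mulr_natr pZ0 mulr0.
have chiE : forall x c g, (forall g, act g x = x) -> c *+ p = x ->
    iota (chi act iota x g) = act g c - c.
  move=> x c g xG cx.
  have [z Hz] : exists z, iota z = act g c - c.
    apply: timg; rewrite mulrnBl -(add_fMn (actD g)) cx xG subrr //.
  have [c' [c'x Hc']] : exists c', c' *+ p = x /\
      iota (chi act iota x g) = act g c' - c'.
    by apply: (ClassicalEpsilon.epsilon_spec (inhabits (0 : 'Z_p))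
      (fun z => exists c : M, c *+ p = x /\ iota z = act g c - c)); exists z, c.
  rewrite Hc'.
  have t : act g (c' - c) = c' - c.
    by apply: triv; rewrite mulrnBl c'x cx subrr.
  rewrite (add_fB (actD g)) in t.
  have -> : act g c' = (c' - c) + act g c by rewrite -t subrK.
  by rewrite addrAC [c' - c - c']addrAC subrr add0r addrC.
have [c0 c0a] := divM a.
have [d0 d0b] := divM b.
set xa := chi act iota a; set xb := chi act iota b.
have Ea : forall g, iota (xa g) = act g c0 - c0 by move=> g; exact: chiE.
have Eb : forall g, iota (xb g) = act g d0 - d0 by move=> g; exact: chiE.
have hom : forall x c, (forall g, iota (chi act iota x g) = act g c - c) ->
    forall g h, chi act iota x (gmul Gm g h) = chi act iota x g + chi act iota x h.
  move=> x c Ex g h; apply: iinj; rewrite iD !Ex actM.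
  have t := triv g _ (itors (chi act iota x h)); rewrite Ex (add_fB (actD g)) in t.
  rewrite -[act g (act h c)](subrK (act g c)) t.
  by rewrite -addrA addrC.
have homa : forall g h, xa (gmul Gm g h) = xa g + xa h := hom a c0 Ea.
have homb : forall g h, xb (gmul Gm g h) = xb g + xb h := hom b d0 Eb.
have vlt : forall x : 'Z_p, (x < p)%N.
  by move=> x; apply: (leq_trans (ltn_ord x)); rewrite Zp_cast.
have vadd : forall x y : 'Z_p, nat_of_ord (x + y : 'Z_p) = ((nat_of_ord x + nat_of_ord y) %% p)%N.
  by move=> x y; rewrite -{1}(natr_Zp x) -{1}(natr_Zp y) -natrD val_Zp_nat.
have lcchi : forall x c, (forall g, iota (chi act iota x g) = act g c - c) ->
    locally_const_on [set: G] (chi act iota x).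
  move=> x c Ex g _.
  exists ((fun h => gmul Gm (ginv Gm g) h) @^-1` [set y | act y c = c]); split.
  - apply: open_comp; [move=> y _; exact: lmul_cont | exact: actO].
  - by rewrite /= gVmul act1.
  - move=> h /= hh _; apply: iinj; rewrite !Ex.
    have -> : h = gmul Gm g (gmul Gm (ginv Gm g) h) by rewrite gmulA gmulV g1mul.
    by rewrite actM hh.
have lcxa : locally_const_on [set: G] xa := lcchi a c0 Ea.
have lcxb : locally_const_on [set: G] xb := lcchi b d0 Eb.
set kf := fun g => xa g * xb g + f g.
set E := fun g => d0 *+ nat_of_ord (xa g) + iota (kf g).
set ovf := fun g h => ((nat_of_ord (xa g) + nat_of_ord (xa h)) %/ p)%N.
have kid : forall g h, kf (gmul Gm g h) = xb g * xa h + kf h + kf g.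
  move=> g h; rewrite /kf homa homb.
  have -> : f (gmul Gm g h) = f g + f h - xa g * xb h by rewrite fcup; ring.
  ring.
have lckf : locally_const_on [set: G] kf :=
  @lc2 _ _ _ _ _ _ _ (fun u v => u + v) (@lc2 _ _ _ _ _ _ _ (fun u v => u * v) lcxa lcxb) flc.
clearbody kf.
have EI : forall g h, E (gmul Gm g h) + b *+ ovf g h = act g (E h) + E g.
  move=> g h; rewrite /E kid !iD actD (add_fMn (actD g)) (triv g (iota (kf h))) ?itors //.
  have -> : act g d0 = iota (xb g) + d0 by rewrite Eb subrK.
  rewrite mulrnDl -(add_fMn iD) -mulr_natr natr_Zp.
  rewrite [iota _ + d0 *+ _]addrC.
  apply: rearr.
  rewrite -d0b -mulrnA -mulrnDr homa vadd.
  by rewrite -mulrnDr /ovf mulnC addnC -divn_eq.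
set K := ker_chi act iota a.
have xa1 : xa (gone Gm) = 0.
  have := homa (gone Gm) (gone Gm); rewrite gmul1.
  by move=> /(congr1 (fun y => y - xa (gone Gm))); rewrite subrr addrK.
have xaV : forall g, xa (ginv Gm g) = - xa g.
  move=> g; apply/eqP; rewrite -subr_eq0 opprK -homa gVmul xa1 //.
have inK : forall g, K g <-> act g c0 = c0.
  move=> g; rewrite /K /ker_chi /=; split.
    by move=> h; apply/eqP; rewrite -subr_eq0 -Ea; apply/eqP; rewrite [xa g]h.
  by move=> h; apply: iinj; rewrite Ea h subrr z0.
have oK : open_subgroup Gm K.
  split.
  - have -> : K = [set g | act g c0 = c0] by apply/seteqP; split=> g /inK.
    exact: actO.
  - exact: xa1.
  - by move=> g h Kg Kh; change (xa (gmul Gm g h) = 0); rewrite homa [xa g]Kg [xa h]Kh addr0.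
  - by move=> g Kg; change (xa (ginv Gm g) = 0); rewrite xaV [xa g]Kg oppr0.
have lcE : locally_const_on K E.
  apply: lc_sub.
  exact: (@lc2 _ _ _ _ _ _ _ (fun u v => d0 *+ nat_of_ord u + iota v) lcxa lckf).
have cocE : forall g h, K g -> K h -> E (gmul Gm g h) = E g + act g (E h).
  move=> g h Kg Kh; have := EI g h.
  have Kg' : xa g = 0 := Kg; have Kh' : xa h = 0 := Kh.
  by rewrite /ovf Kg' Kh' /= div0n mulr0n addr0 addrC.
have [m Hm] := H1 K oK E lcE cocE.
set E' := fun g => E g - (act g m - m).
have E'I : forall g h, E' (gmul Gm g h) + b *+ ovf g h = act g (E' h) + E' g.
  move=> g h; rewrite /E' (add_fB (actD g)) (add_fB (actD g)) actM.
  exact: rearr2.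
have E'K : forall g, K g -> E' g = 0 by move=> g Kg; rewrite /E' Hm // subrr.
clearbody E'.
have [[g0 g0n]|allz] : (exists g0, xa g0 != 0) \/ (forall g, xa g = 0).
  case: (pselect (exists g0, xa g0 != 0)) => [h|nh]; first by left.
  right=> g; apply/eqP; apply/negP => /negP h; apply: nh; by exists g.
2: {
  exists b; split; first by move=> g _; exact: bG.
  exists 1%N, (fun _ => gone Gm); split.
    move=> g; exists ord0; split; first exact: allz.
    by move=> i _; rewrite (ord1 i).
  by rewrite big_ord1 act1.
}
set gp := fun (x : G) (n : nat) => iter n (gmul Gm x) (gone Gm).
have xapow : forall x n, xa (gp x n) = xa x *+ n.
  move=> x; elim=> [|n IH]; first by rewrite mulr0n xa1.
  by rewrite mulrS -IH -homa.
have v0 : (0 < nat_of_ord (xa g0))%N.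
  rewrite lt0n; apply: contra g0n => /eqP h; apply/eqP/val_inj; exact: h.
have un : xa g0 \is a GRing.unit.
  rewrite -(natr_Zp (xa g0)) unitZpE // prime_coprime //.
  by apply/negP => /(dvdn_leq v0); rewrite leqNgt vlt.
set s := gp g0 (nat_of_ord ((xa g0)^-1)).
have xs : xa s = 1 by rewrite xapow -mulr_natr natr_Zp mulrV.
have vs : nat_of_ord (xa s) = 1%N.
  by rewrite xs -[1 : 'Z_p]mulr1n val_Zp_nat // modn_small.
have vspow : forall i, nat_of_ord (xa (gp s i)) = (i %% p)%N.
  by move=> i; rewrite xapow xs val_Zp_nat.
set al := E' s.
have step : forall i, act s (\sum_(j < i) act (gp s j) al) + al =
    \sum_(j < i.+1) act (gp s j) al.
  move=> i; rewrite big_ord_recl /= act1 addrC; congr (_ + _).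
  rewrite (add_fsum (actD s)); apply: eq_bigr => j _.
  by rewrite -actM add0n.
have S : forall i, (i < p)%N -> E' (gp s i) = \sum_(j < i) act (gp s j) al.
  elim=> [_|i IH ilt]; first by rewrite big_ord0 E'K //; exact: xa1.
  have := E'I s (gp s i).
  rewrite /ovf vs vspow (modn_small (ltnW ilt)) (divn_small (ilt : (1 + i < p)%N)).
  rewrite mulr0n addr0 -/al => h.
  change (E' (gmul Gm s (gp s i)) = \sum_(j < i.+1) act (gp s j) al).
  by rewrite h IH ?(ltnW ilt) // step.
exists al; split.
  move=> h Kh; have Kh' : xa h = 0 := Kh.
  set t := gmul Gm (ginv Gm s) (gmul Gm h s).
  have Kt : K t by change (xa t = 0); rewrite !homa xaV Kh' xs add0r addNr.
  have e1 := E'I h s; have e2 := E'I s t.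
  rewrite /ovf Kh' vs /= add0n (divn_small p1) mulr0n addr0 (E'K h Kh) addr0 in e1.
  have Kt' : xa t = 0 := Kt.
  rewrite /ovf Kt' vs /= addn0 (divn_small p1) mulr0n addr0 (E'K t Kt) in e2.
  rewrite (add_f0 (actD s)) add0r in e2.
  rewrite -/al in e1 e2; rewrite -e1 -e2 /t gmulA gmulV g1mul //.
exists p, (fun i : 'I_p => gp s i); split.
  move=> g.
  have xv : forall i : 'I_p, xa (gmul Gm (ginv Gm (gp s i)) g) = xa g - (nat_of_ord i)%:R.
    by move=> i; rewrite homa xaV xapow xs addrC.
  have ilt : (nat_of_ord (xa g) < p)%N by exact: vlt.
  exists (Ordinal ilt); split.
    by change (xa (gmul Gm (ginv Gm (gp s (Ordinal ilt))) g) = 0); rewrite xv /= natr_Zp subrr.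
  move=> j Kj; have Kj' : xa (gmul Gm (ginv Gm (gp s j)) g) = 0 := Kj.
  rewrite xv in Kj'; move/eqP: Kj'; rewrite subr_eq0 => /eqP Kj'.
  apply/val_inj => /=.
  have := congr1 (@nat_of_ord _) Kj'; rewrite val_Zp_nat // modn_small //.
have := E'I s (gp s p.-1).
have -> : gmul Gm s (gp s p.-1) = gp s p by rewrite /gp -iterS prednK // prime_gt0.
rewrite E'K; last by change (xa (gp s p) = 0); rewrite xapow xs pZ0.
have pm : (p.-1 < p)%N by rewrite prednK ?prime_gt0.
rewrite /ovf vs vspow (modn_small pm) add1n prednK ?prime_gt0 // divnn prime_gt0 //=.
rewrite mulr1n add0r -/al => ->.
rewrite (S _ pm) step prednK ?prime_gt0 //.
Qed.
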